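(* Let $f:A\to B$ be a ring homomorphism, $\mathfrak b$ an ideal of $B$, and $A\bowtie^f\mathfrak b:=\{(a,f(a)+b): a\in A,\ b\in\mathfrak b\}\subseteq A\times B$. (1) If $A\bowtie^f\mathfrak b$ is a coherent ring, then $A$ is a coherent ring. (2) If $A$ is a coherent ring and $\mathfrak b$ is a coherent $A$-module (with the structure induced by $f$, $a\cdot x=f(a)x$), then $A\bowtie^f\mathfrak b$ is a coherent ring.
   Context: All rings are commutative with identity. A module $M$ over a ring $R$ is coherent if it is finitely generated and every finitely generated submodule of $M$ is finitely presented; a ring $R$ is coherent if it is coherent as a module over itself (every finitely generated ideal is finitely presented). *)

(* Defs.v *)
From HB Require Import structures.
From mathcomp Require Import all_boot all_order all_algebra.
Set Implicit Arguments. Unset Strict Implicit. Unset Printing Implicit Defensive.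
Import Order.TTheory GRing.Theory.
Local Open Scope ring_scope.

(* Modules are handled concretely: the scalars form a subring of a commutative
   ring R, given by a predicate K (K = fun _ => True for R itself); the module
   elements live in a Z-module V with scalar action act : R -> V -> V, and a
   module is a predicate M on V.  This lets us treat both ideals of a ring over
   itself, the A-module b (a.x = f a * x), and the subring A ⋈^f b of A x B. *)

Section ModuleNotions.
Variables (R : comPzRingType) (K : R -> Prop) (V : zmodType) (act : R -> V -> V).

Definition span (n : nat) (s : 'I_n -> V) : V -> Prop :=
  fun x => exists c : 'I_n -> R, (forall i, K (c i)) /\ x = \sum_(i < n) act (c i) (s i).

Definition is_submodule (N : V -> Prop) : Prop :=
  [/\ N 0, (forall x y, N x -> N y -> N (x + y)), (forall x, N x -> N (- x))
    & (forall r x, K r -> N x -> N (act r x))].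

Definition fin_gen (N : V -> Prop) : Prop :=
  exists n (s : 'I_n -> V), forall x, N x <-> span s x.

End ModuleNotions.

Definition relations (R : comPzRingType) (K : R -> Prop) (V : zmodType)
  (act : R -> V -> V) (n : nat) (s : 'I_n -> V) : 'rV[R]_n -> Prop :=
  fun c => (forall i, K (c 0 i)) /\ \sum_(i < n) act (c 0 i) (s i) = 0.

Definition fin_pres (R : comPzRingType) (K : R -> Prop) (V : zmodType)
  (act : R -> V -> V) (N : V -> Prop) : Prop :=
  exists n (s : 'I_n -> V), (forall x, N x <-> span K act s x) /\
    fin_gen K (fun (r : R) (v : 'rV[R]_n) => r *: v) (relations K act s).

Definition coherent_module (R : comPzRingType) (K : R -> Prop) (V : zmodType)
  (act : R -> V -> V) (M : V -> Prop) : Prop :=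
  fin_gen K act M /\
  forall N : V -> Prop, (forall x, N x -> M x) -> is_submodule K act N ->
    fin_gen K act N -> fin_pres K act N.

Definition coherent_subring (R : comPzRingType) (K : R -> Prop) : Prop :=
  coherent_module K (fun x y : R => x * y) K.

Definition coherent_ring (R : comPzRingType) : Prop :=
  coherent_subring (fun _ : R => True).

Definition is_ideal (B : comPzRingType) (b : B -> Prop) : Prop :=
  [/\ b 0, (forall x y, b x -> b y -> b (x + y)), (forall x, b x -> b (- x))
    & (forall r x, b x -> b (r * x))].

Definition amalgamation (A B : comPzRingType) (f : {rmorphism A -> B})
  (b : B -> Prop) : A * B -> Prop :=
  fun p => exists a x, b x /\ p = (a, f a + x).

(* Main.v *)
Require Import Defs.
From HB Require Import structures.
From mathcomp Require Import all_boot all_order all_algebra.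
From mathcomp Require Import ring.
From Stdlib Require Import IndefiniteDescription.
Import GRing.Theory.
Local Open Scope ring_scope.
Set Implicit Arguments. Unset Strict Implicit. Unset Printing Implicit Defensive.
Lemma fchoice (I X : Type) (P : I -> X -> Prop) :
  (forall i, exists x, P i x) -> exists g : I -> X, forall i, P i (g i).
Proof.
move=> H; exists (fun i => proj1_sig (constructive_indefinite_description _ (H i))).
move=> i; exact: proj2_sig.
Qed.

Lemma fin_gen_fin (R : comPzRingType) (K : R -> Prop) (V : zmodType)
  (act : R -> V -> V) (T : finType) (h : T -> V) (M : V -> Prop) :
  (forall x, M x <-> exists c : T -> R, (forall t, K (c t)) /\
        x = \sum_t act (c t) (h t)) -> fin_gen K act M.
Proof.
move=> H; exists #|T|, (fun i => h (enum_val i)) => x; rewrite H; split.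
- move=> [c [Kc ->]]; exists (fun i => c (enum_val i)); split=> [i|]; first exact: Kc.
  by rewrite (big_enum_val (fun t => act (c t) (h t))).
- move=> [c [Kc ->]]; exists (fun t => c (enum_rank t)); split=> [t|]; first exact: Kc.
  rewrite (big_enum_val (fun t => act (c (enum_rank t)) (h t))).
  by apply: eq_bigr => i _; rewrite enum_valK.
Qed.

Record modstr (R : comPzRingType) (K : R -> Prop) (V : zmodType)
  (act : R -> V -> V) : Prop := ModStr {
  K0 : K 0; K1 : K 1; KD : forall x y, K x -> K y -> K (x + y);
  KN : forall x, K x -> K (- x); KM : forall x y, K x -> K y -> K (x * y);
  actDr : forall r x y, act r (x + y) = act r x + act r y;
  actDl : forall r s x, act (r + s) x = act r x + act s x;
  actM : forall r s x, act (r * s) x = act r (act s x);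
  act1 : forall x, act 1 x = x }.

Lemma rows_mod (R : comPzRingType) (K : R -> Prop) (V : zmodType)
  (act : R -> V -> V) (hM : modstr K act) n :
  modstr K (fun r (v : 'rV[R]_n) => r *: v).
Proof.
case: hM => *; split=> //.
- by move=> r x y; rewrite scalerDr.
- by move=> r s x; rewrite scalerDl.
- by move=> r s x; rewrite scalerA.
- by move=> x; rewrite scale1r.
Qed.

Section Gen.
Variables (R : comPzRingType) (K : R -> Prop) (V : zmodType) (act : R -> V -> V).
Hypothesis hM : modstr K act.
Let K0 := K0 hM. Let K1 := K1 hM. Let KD := KD hM. Let KN := KN hM. Let KM := KM hM.
Let actDr := actDr hM. Let actDl := actDl hM. Let actM := actM hM. Let act1 := act1 hM.

Lemma act0r x : act 0 x = 0.
Proof. by apply: (addrI (act 0 x)); rewrite addr0 -actDl addr0. Qed.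
Lemma actr0 r : act r 0 = 0.
Proof. by apply: (addrI (act r 0)); rewrite addr0 -actDr addr0. Qed.
Lemma actNl r x : act (- r) x = - act r x.
Proof. by apply: (addrI (act r x)); rewrite -actDl !subrr act0r. Qed.
Lemma act_sumr r n (F : 'I_n -> V) : act r (\sum_i F i) = \sum_i act r (F i).
Proof. exact: (big_morph _ (actDr r) (actr0 r)). Qed.
Lemma act_suml x n (F : 'I_n -> R) : act (\sum_i F i) x = \sum_i act (F i) x.
Proof. exact: (big_morph (act^~ x) (fun a b => actDl a b x) (act0r x)). Qed.

Lemma K_sum n (F : 'I_n -> R) : (forall i, K (F i)) -> K (\sum_i F i).
Proof. by move=> H; apply: big_ind. Qed.

Lemma span_ind n (s : 'I_n -> V) (P : V -> Prop) :
  P 0 -> (forall x y, P x -> P y -> P (x + y)) ->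
  (forall r x, K r -> P x -> P (act r x)) -> (forall i, P (s i)) ->
  forall x, Defs.span K act s x -> P x.
Proof.
move=> P0 PD PZ Ps x [c [Kc ->]]; apply: big_ind => // i _; exact: PZ.
Qed.

Lemma span_sub n (s : 'I_n -> V) : is_submodule K act (Defs.span K act s).
Proof.
split.
- exists (fun _ => 0); split=> //; rewrite big1 // => i _; exact: act0r.
- move=> x y [c [Kc ->]] [d [Kd ->]]; exists (fun i => c i + d i); split=> [i|].
    exact: KD.
  by rewrite -big_split; apply: eq_bigr => i _; rewrite actDl.
- move=> x [c [Kc ->]]; exists (fun i => - c i); split=> [i|]; first exact: KN.
  by rewrite -sumrN; apply: eq_bigr => i _; rewrite actNl.
- move=> r x Kr [c [Kc ->]]; exists (fun i => r * c i); split=> [i|]; first exact: KM.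
  by rewrite act_sumr; apply: eq_bigr => i _; rewrite actM.
Qed.

Lemma span_gen n (s : 'I_n -> V) i : Defs.span K act s (s i).
Proof.
exists (fun j => if j == i then 1 else 0); split=> [j|]; first by case: (j == i).
rewrite (bigD1 i) //= eqxx act1 big1 ?addr0 // => j /negbTE ->; exact: act0r.
Qed.

Lemma span_mono n m (s : 'I_n -> V) (t : 'I_m -> V) :
  (forall i, Defs.span K act t (s i)) -> forall x, Defs.span K act s x -> Defs.span K act t x.
Proof.
move=> H; have [P0 PD PN PZ] := span_sub t.
by apply: span_ind.
Qed.

Lemma rel_sub n (s : 'I_n -> V) :
  is_submodule K (fun r (v : 'rV[R]_n) => r *: v) (relations K act s).
Proof.
split.
- split=> [i|]; first by rewrite mxE.
  by rewrite big1 // => i _; rewrite mxE act0r.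
- move=> x y [Kx hx] [Ky hy]; split=> [i|]; first by rewrite mxE; apply: KD.
  rewrite (eq_bigr (fun i => act (x 0 i) (s i) + act (y 0 i) (s i))).
    by rewrite big_split /= hx hy addr0.
  by move=> i _; rewrite mxE actDl.
- move=> x [Kx hx]; split=> [i|]; first by rewrite mxE; apply: KN.
  rewrite (eq_bigr (fun i => - act (x 0 i) (s i))).
    by rewrite sumrN hx oppr0.
  by move=> i _; rewrite mxE actNl.
- move=> r x Kr [Kx hx]; split=> [i|]; first by rewrite mxE; apply: KM.
  rewrite (eq_bigr (fun i => act r (act (x 0 i) (s i)))).
    by rewrite -act_sumr hx actr0.
  by move=> i _; rewrite mxE actM.
Qed.


End Gen.

Section Gen2.
Variables (R : comPzRingType) (K : R -> Prop) (V : zmodType) (act : R -> V -> V).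
Hypothesis hM : modstr K act.
Let K0 := K0 hM. Let K1 := K1 hM. Let KD := KD hM. Let KN := KN hM. Let KM := KM hM.
Let actDr := actDr hM. Let actDl := actDl hM. Let actM := actM hM. Let act1 := act1 hM.

Lemma sub_comb (N : V -> Prop) (hN : is_submodule K act N) n (g : 'I_n -> V) :
  (forall k, N (g k)) -> forall x, Defs.span K act g x -> N x.
Proof. by case: hN => N0 ND _ NZ Ng; apply: span_ind. Qed.

Lemma rel_transfer n n' (s : 'I_n -> V) (s' : 'I_n' -> V) :
  (forall x, Defs.span K act s x <-> Defs.span K act s' x) ->
  fin_gen K (fun r (v : 'rV[R]_n') => r *: v) (relations K act s') ->
  fin_gen K (fun r (v : 'rV[R]_n) => r *: v) (relations K act s).
Proof.
move=> Hss [q [g hg]].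
have [al hal] : exists al : 'I_n -> 'I_n' -> R, forall i,
    (forall j, K (al i j)) /\ s i = \sum_j act (al i j) (s' j).
  have H : forall i, exists c : 'I_n' -> R, (forall j, K (c j)) /\ s i = \sum_j act (c j) (s' j).
    move=> i; exact: (proj1 (Hss (s i))) (span_gen hM s i).
  exact: (fchoice H).
have [be hbe] : exists be : 'I_n' -> 'I_n -> R, forall j,
    (forall i, K (be j i)) /\ s' j = \sum_i act (be j i) (s i).
  have H : forall j, exists c : 'I_n -> R, (forall i, K (c i)) /\ s' j = \sum_i act (c i) (s i).
    move=> j; exact: (proj2 (Hss (s' j))) (span_gen hM s' j).
  exact: (fchoice H).
have hrM := rows_mod hM n'; have hrM' := rows_mod hM n.
have relg : forall k, relations K act s' (g k) :=
  fun k => (proj2 (hg (g k))) (span_gen hrM g k).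
pose h (t : ('I_q + 'I_n)%type) : 'rV[R]_n := match t with
  | inl k => \row_i \sum_j g k 0 j * be j i
  | inr i0 => \row_i ((i == i0)%:R - \sum_j al i0 j * be j i) end.
apply: (@fin_gen_fin _ _ _ _ _ h) => x; split.
- move=> hx; have [Kx x0] := hx.
  pose c : 'rV[R]_n' := \row_j \sum_i x 0 i * al i j.
  have : relations K act s' c.
    split=> [j|].
      by rewrite mxE; apply: (K_sum hM) => i; apply: KM; [apply: Kx | apply: (proj1 (hal i))].
    transitivity (\sum_i act (x 0 i) (s i)); last exact: x0.
    rewrite (eq_bigr (fun j => \sum_i act (x 0 i) (act (al i j) (s' j)))); last first.
      by move=> j _; rewrite mxE (act_suml hM); apply: eq_bigr => i _; rewrite actM.
    rewrite exchange_big /=; apply: eq_bigr => i _.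
    by rewrite -(act_sumr hM) -(proj2 (hal i)).
  move/hg => [d [Kd hc]].
  exists (fun t => match t with inl k => d k | inr i => x 0 i end); split.
    by case=> [k|i] /=; [apply: Kd | apply: Kx].
  rewrite big_sumType /=; apply/rowP => i.
  rewrite !mxE !summxE.
  have hc' : forall j, \sum_i x 0 i * al i j = \sum_k d k * g k 0 j.
    move=> j; have := congr1 (fun m : 'rV[R]_n' => m 0 j) hc.
    by rewrite /= !mxE summxE => ->; apply: eq_bigr => k _; rewrite mxE.
  rewrite (eq_bigr (fun k => \sum_j d k * g k 0 j * be j i)); last first.
    by move=> k _; rewrite !mxE mulr_sumr; apply: eq_bigr => j _; rewrite mulrA.
  rewrite exchange_big /=.
  rewrite (eq_bigr (fun j => (\sum_i x 0 i * al i j) * be j i)); last first.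
    by move=> j _; rewrite hc' mulr_suml.
  rewrite (eq_bigr (fun i0 => x 0 i0 * (i == i0)%:R - \sum_j x 0 i0 * al i0 j * be j i)); last first.
    by move=> i0 _; rewrite !mxE mulrBr mulr_sumr; congr (_ - _); apply: eq_bigr => j _; rewrite mulrA.
  have e1 : \sum_i0 x 0 i0 * (i == i0)%:R = x 0 i.
    rewrite (bigD1 i) //= eqxx mulr1 big1 ?addr0 // => i0 hi.
    by rewrite eq_sym (negbTE hi) mulr0.
  rewrite sumrB e1 [X in _ - X]exchange_big /=.
  rewrite [X in _ - X](eq_bigr (fun j => (\sum_i0 x 0 i0 * al i0 j) * be j i)).
    by rewrite addrC subrK.
  by move=> j _; rewrite mulr_suml.
- move=> [e [Ke ->]]; have [R0 RD _ RZ] := rel_sub hM s.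
  apply: big_ind => // t _; apply: RZ (Ke t) _; case: t => [k|i0] /=.
  + split=> [i|].
      rewrite mxE; apply: (K_sum hM) => j; apply: KM; [apply: (proj1 (relg k)) | apply: (proj1 (hbe j))].
    rewrite (eq_bigr (fun i => \sum_j act (g k 0 j) (act (be j i) (s i)))); last first.
      by move=> i _; rewrite mxE (act_suml hM); apply: eq_bigr => j _; rewrite actM.
    transitivity (\sum_j act (g k 0 j) (s' j)); last exact: (proj2 (relg k)).
    rewrite exchange_big /=; apply: eq_bigr => j _.
    by rewrite -(act_sumr hM) -(proj2 (hbe j)).
  + split=> [i|].
      rewrite mxE; apply: KD; first by case: (i == i0).
      apply: KN; apply: (K_sum hM) => j; apply: KM; [apply: (proj1 (hal i0)) | apply: (proj1 (hbe j))].
    rewrite (eq_bigr (fun i => act (i == i0)%:R (s i) -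
        \sum_j act (al i0 j) (act (be j i) (s i)))); last first.
      move=> i _; rewrite mxE actDl (actNl hM) (act_suml hM); congr (_ - _).
      by apply: eq_bigr => j _; rewrite actM.
    rewrite sumrB (bigD1 i0) //= eqxx act1 big1 ?addr0; last first.
      by move=> i /negbTE ->; rewrite (act0r hM).
    rewrite exchange_big /= (proj2 (hal i0)); apply/eqP; rewrite subr_eq0; apply/eqP.
    by apply: eq_bigr => j _; rewrite -(act_sumr hM) -(proj2 (hbe j)).
Qed.

Lemma coh_rel (M : V -> Prop) : coherent_module K act M ->
  forall n (s : 'I_n -> V), (forall i, M (s i)) ->
  fin_gen K (fun r (v : 'rV[R]_n) => r *: v) (relations K act s).
Proof.
move=> [[n0 [s0 hs0]] hcoh] n s Ms.
have sub : forall x, Defs.span K act s x -> M x.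
  move=> x hx; apply/hs0; apply: (span_mono hM (s := s)) hx => i; apply/hs0/Ms.
have [n' [s' [hss' hrel]]] := hcoh _ sub (span_sub hM s)
  (ex_intro _ n (ex_intro _ s (fun x => iff_refl _))).
exact: (rel_transfer hss' hrel).
Qed.

End Gen2.

Lemma fin_gen_image (R1 R2 : comPzRingType) (K1 : R1 -> Prop) (K2 : R2 -> Prop)
  m n (Q : 'rV[R1]_m -> Prop) (P : 'rV[R2]_n -> Prop) (sg : R1 -> R2)
  (phi : 'rV[R1]_m -> 'rV[R2]_n) :
  modstr K1 (fun r (v : 'rV[R1]_m) => r *: v) ->
  (forall d, K1 d -> K2 (sg d)) ->
  phi 0 = 0 -> (forall x y, phi (x + y) = phi x + phi y) ->
  (forall d x, phi (d *: x) = sg d *: phi x) ->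
  is_submodule K2 (fun r (v : 'rV[R2]_n) => r *: v) P ->
  (forall y, Q y -> P (phi y)) -> (forall x, P x -> exists y, Q y /\ x = phi y) ->
  fin_gen K1 (fun r v => r *: v) Q -> fin_gen K2 (fun r v => r *: v) P.
Proof.
move=> hK1 Ksg phi0 phiD phiZ [P0 PD _ PZ] QP PQ [q [g hg]].
exists q, (fun k => phi (g k)) => x; split.
- move=> /PQ [y [/hg [d [Kd ->]] ->]].
  exists (fun k => sg (d k)); split=> [k|]; first exact: Ksg.
  rewrite (big_morph phi phiD phi0); apply: eq_bigr => k _; exact: phiZ.
- apply: span_ind => // k; apply: QP; apply/hg; exact: (span_gen hK1).
Qed.
Lemma pairE2 (A B : Type) (p q : A * B) : p.1 = q.1 -> p.2 = q.2 -> p = q.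
Proof. by case: p; case: q => /= ? ? ? ? -> ->. Qed.

Lemma fst_sum (A B : comPzRingType) n (F : 'I_n -> A * B) :
  (\sum_i F i).1 = \sum_i (F i).1.
Proof. exact: (big_morph fst (fun x y => erefl) erefl). Qed.
Lemma snd_sum (A B : comPzRingType) n (F : 'I_n -> A * B) :
  (\sum_i F i).2 = \sum_i (F i).2.
Proof. exact: (big_morph snd (fun x y => erefl) erefl). Qed.

Section Main.
Variables (A B : comPzRingType) (f : {rmorphism A -> B}) (b : B -> Prop).
Hypothesis hb : is_ideal b.
Let b0 : b 0. Proof. by case: hb. Qed.
Let bD : forall x y, b x -> b y -> b (x + y). Proof. by case: hb. Qed.
Let bN : forall x, b x -> b (- x). Proof. by case: hb. Qed.
Let bM : forall r x, b x -> b (r * x). Proof. by case: hb. Qed.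

Local Notation S := (amalgamation f b).
Definition iA (a : A) : A * B := (a, f a).

Lemma S_char p : S p <-> b (p.2 - f p.1).
Proof.
split.
- by move=> [a [x [bx ->]]] /=; rewrite addrAC subrr add0r.
- move=> h; exists p.1, (p.2 - f p.1); split=> //.
  by case: p h => p1 p2 /= _; rewrite addrC subrK.
Qed.

Lemma S_i a : S (iA a).
Proof. by apply/S_char; rewrite /= subrr. Qed.

Lemma S_add p q : S p -> S q -> S (p + q).
Proof.
move=> /S_char hp /S_char hq; apply/S_char.
have -> : (p + q).2 - f (p + q).1 = (p.2 - f p.1) + (q.2 - f q.1).
  by rewrite /= rmorphD; ring.
exact: bD.
Qed.

Lemma S_mul p q : S p -> S q -> S (p * q).
Proof.
move=> /S_char hp /S_char hq; apply/S_char.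
have -> : (p * q).2 - f (p * q).1 = p.2 * (q.2 - f q.1) + f q.1 * (p.2 - f p.1).
  by rewrite /= rmorphM; ring.
by apply: bD; apply: bM.
Qed.

Lemma S_opp p : S p -> S (- p).
Proof.
move=> /S_char hp; apply/S_char.
have -> : (- p).2 - f (- p).1 = - (p.2 - f p.1) by rewrite /= rmorphN; ring.
exact: bN.
Qed.

Lemma hS : modstr S (fun x y : A * B => x * y).
Proof.
split.
- by apply/S_char; rewrite /= rmorph0 subrr.
- by apply/S_char; rewrite /= rmorph1 subrr.
- exact: S_add.
- exact: S_opp.
- exact: S_mul.
- by move=> *; rewrite mulrDr.
- by move=> *; rewrite mulrDl.
- by move=> *; rewrite mulrA.
- by move=> *; rewrite mul1r.
Qed.

Lemma hAm : modstr (fun _ : A => True) (fun x y : A => x * y).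
Proof.
split=> //.
- by move=> *; rewrite mulrDr.
- by move=> *; rewrite mulrDl.
- by move=> *; rewrite mulrA.
- by move=> *; rewrite mul1r.
Qed.

Lemma hbm : modstr (fun _ : A => True) (fun (a : A) (x : B) => f a * x).
Proof.
split=> //.
- by move=> *; rewrite mulrDr.
- by move=> *; rewrite rmorphD mulrDl.
- by move=> *; rewrite rmorphM mulrA.
- by move=> *; rewrite rmorph1 mul1r.
Qed.

Lemma part1 : coherent_subring S -> coherent_ring A.
Proof.
move=> hcoh; split.
  exists 1%N, (fun _ => 1) => x; split=> // _.
  by exists (fun _ => x); split=> //; rewrite big_ord1 mulr1.
move=> N _ hN [n [s hs]]; exists n, s; split=> //.
have hQ := coh_rel hS hcoh (s := fun j => iA (s j)) (fun j => S_i (s j)).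
apply: (fin_gen_image (rows_mod hS n) (sg := fst) (phi := map_mx fst)) hQ.
- by [].
- by apply/rowP => j; rewrite !mxE.
- by move=> x y; apply/rowP => j; rewrite !mxE.
- by move=> d x; apply/rowP => j; rewrite !mxE.
- exact: (rel_sub hAm s).
- move=> y [_ hy]; split=> //.
  have := congr1 fst hy; rewrite fst_sum /= => hy1.
  by rewrite -[RHS]hy1; apply: eq_bigr => j _; rewrite mxE.
- move=> x [_ hx]; exists (map_mx iA x); split; last first.
    by apply/rowP => j; rewrite !mxE.
  split=> [j|]; first by rewrite mxE; apply: S_i.
  apply: pairE2; rewrite ?fst_sum ?snd_sum /=.
    by rewrite -[RHS]hx; apply: eq_bigr => j _; rewrite mxE.
  transitivity (f (\sum_j x 0 j * s j)); last by rewrite hx rmorph0.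
  rewrite rmorph_sum; apply: eq_bigr => j _.
  by rewrite mxE rmorphM.
Qed.

Definition actI (a : A) (p : A * B) := iA a * p.

Lemma iAD x y : iA (x + y) = iA x + iA y.
Proof. by apply: pairE2; rewrite //= rmorphD. Qed.
Lemma iAM x y : iA (x * y) = iA x * iA y.
Proof. by apply: pairE2; rewrite //= rmorphM. Qed.
Lemma iA0 : iA 0 = 0.
Proof. by apply: pairE2; rewrite //= rmorph0. Qed.
Lemma iA1 : iA 1 = 1.
Proof. by apply: pairE2; rewrite //= rmorph1. Qed.

Lemma hI : modstr (fun _ : A => True) actI.
Proof.
split=> //.
- by move=> *; rewrite /actI mulrDr.
- by move=> *; rewrite /actI iAD mulrDl.
- by move=> *; rewrite /actI iAM mulrA.
- by move=> *; rewrite /actI iA1 mul1r.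
Qed.

Lemma b_sum n (F : 'I_n -> B) : (forall i, b (F i)) -> b (\sum_i F i).
Proof. by move=> H; apply: big_ind. Qed.

Lemma S_sum (I : finType) (F : I -> A * B) : (forall i, S (F i)) -> S (\sum_i F i).
Proof. by move=> H; apply: big_ind => //; [exact: (K0 hS) | exact: S_add]. Qed.

Lemma stepA : coherent_ring A ->
  coherent_module (fun _ : A => True) (fun (a : A) (x : B) => f a * x) b ->
  forall m (t : 'I_m -> A * B), (forall j, S (t j)) ->
  fin_gen (fun _ : A => True) (fun r (v : 'rV[A]_m) => r *: v)
    (relations (fun _ : A => True) actI t).
Proof.
move=> hAc hbc m t St.
pose a j := (t j).1; pose x j := (t j).2 - f (t j).1.
have bx : forall j, b (x j) by move=> j; apply/S_char.
have relI : forall c : 'rV[A]_m, relations (fun _ : A => True) actI t c <->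
    (\sum_j c 0 j * a j = 0 /\ \sum_j f (c 0 j) * x j = 0).
  move=> c.
  have E1 : (\sum_j actI (c 0 j) (t j)).1 = \sum_j c 0 j * a j.
    by rewrite fst_sum.
  have E2 : (\sum_j actI (c 0 j) (t j)).2 =
      f (\sum_j c 0 j * a j) + \sum_j f (c 0 j) * x j.
    rewrite snd_sum rmorph_sum -big_split /=; apply: eq_bigr => j _.
    by rewrite /x /a rmorphM; ring.
  split.
  - move=> [_ h]; have h1 := congr1 fst h; have h2 := congr1 snd h.
    rewrite E1 in h1; rewrite E2 h1 rmorph0 add0r in h2; by split.
  - move=> [h1 h2]; split=> //; apply: pairE2; first by rewrite E1 h1.
    by rewrite E2 h1 h2 rmorph0 addr0.
have [q [g hg]] := coh_rel hAm hAc (s := a) (fun _ => I).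
have relg : forall k, relations (fun _ : A => True) (fun x y : A => x * y) a (g k).
  by move=> k; apply/hg; exact: (span_gen (rows_mod hAm m)).
pose w k := \sum_j f (g k 0 j) * x j.
have bw : forall k, b (w k) by move=> k; apply: b_sum => j; apply: bM.
have hQ := coh_rel hbm hbc (s := w) bw.
have calc : forall d : 'rV[A]_q,
    \sum_j (\sum_k d 0 k *: g k) 0 j * a j = 0 /\
    \sum_j f ((\sum_k d 0 k *: g k) 0 j) * x j = \sum_k f (d 0 k) * w k.
  move=> d; split.
  - rewrite (eq_bigr (fun j => \sum_k d 0 k * (g k 0 j * a j))); last first.
      move=> j _; rewrite summxE mulr_suml; apply: eq_bigr => k _.
      by rewrite mxE mulrA.
    rewrite exchange_big /= big1 // => k _.
    by rewrite -mulr_sumr (proj2 (relg k)) mulr0.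
  - rewrite (eq_bigr (fun j => \sum_k f (d 0 k) * (f (g k 0 j) * x j))); last first.
      move=> j _; rewrite summxE rmorph_sum mulr_suml; apply: eq_bigr => k _.
      by rewrite mxE rmorphM mulrA.
    rewrite exchange_big /=; apply: eq_bigr => k _.
    by rewrite -mulr_sumr.
apply: (fin_gen_image (rows_mod hAm q) (sg := id)
  (phi := fun d => \sum_k d 0 k *: g k)) hQ.
- by [].
- by rewrite big1 // => k _; rewrite mxE scale0r.
- move=> u v; rewrite -big_split; apply: eq_bigr => k _.
  by rewrite mxE scalerDl.
- move=> r u; rewrite scaler_sumr; apply: eq_bigr => k _.
  by rewrite mxE scalerA.
- exact: (rel_sub hI t).
- move=> d [_ hd]; apply/relI; have [c1 c2] := calc d; split=> //.
  by rewrite c2.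
- move=> c /relI [h1 h2].
  have : relations (fun _ : A => True) (fun x y : A => x * y) a c by split.
  move/hg => [d [_ hc]].
  exists (\row_k d k); split.
    split=> //; have [_ c2] := calc (\row_k d k).
    rewrite -[RHS]h2 -[LHS]c2 hc; apply: eq_bigr => j _; congr (f _ * _).
    by rewrite !summxE; apply: eq_bigr => k _; rewrite !mxE.
  by rewrite hc; apply: eq_bigr => k _; rewrite mxE.
Qed.

Lemma part2 : coherent_ring A ->
  coherent_module (fun _ : A => True) (fun (a : A) (x : B) => f a * x) b ->
  coherent_subring S.
Proof.
move=> hAc hbc; split.
  exists 1%N, (fun _ => 1) => x; split.
    by move=> Sx; exists (fun _ => x); split=> //; rewrite big_ord1 mulr1.
  by move=> [c [Kc ->]]; rewrite big_ord1 mulr1; apply: Kc.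
move=> N NS hN [n [s hs]]; exists n, s; split=> //.
have Ss : forall j, S (s j).
  by move=> j; apply: NS; apply/hs; exact: (span_gen hS).
have [[p [y hy]] _] := hbc.
pose z (o : ('I_1 + 'I_p)%type) : A * B :=
  match o with inl _ => 1 | inr l => (0, y l) end.
have Sz : forall o, S (z o).
  case=> [_|l] /=; first exact: (K1 hS).
  apply/S_char; rewrite /= rmorph0 subr0; apply/hy; exact: (span_gen hbm).
have zspan : forall r, S r -> exists ga : ('I_1 + 'I_p)%type -> A,
    r = \sum_o iA (ga o) * z o.
  move=> r /S_char /hy [c [_ hc]].
  exists (fun o => match o with inl _ => r.1 | inr l => c l end).
  rewrite big_sumType /= big_ord1 mulr1; apply: pairE2.
    rewrite /= fst_sum big1 ?addr0 // => l _ /=; exact: mulr0.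
  rewrite /= snd_sum -[LHS](subrK (f r.1)) hc addrC; congr (_ + _).
pose T := (('I_1 + 'I_p) * 'I_n)%type.
pose tt (k : 'I_#|{: T}|) := z (enum_val k).1 * s (enum_val k).2.
have St : forall k, S (tt k) by move=> k; apply: S_mul.
have hQ := stepA hAc hbc St.
pose phi (c : 'rV[A]_#|{: T}|) : 'rV[A * B]_n :=
  \row_j \sum_o iA (c 0 (enum_rank (o, j))) * z o.
apply: (fin_gen_image (rows_mod hAm _) (sg := iA) (phi := phi)) hQ.
- by move=> d _; apply: S_i.
- apply/rowP => j; rewrite !mxE big1 // => o _; by rewrite mxE iA0 mul0r.
- move=> u v; apply/rowP => j; rewrite !mxE -big_split; apply: eq_bigr => o _.
  by rewrite mxE iAD mulrDl.
- move=> d u; apply/rowP => j; rewrite !mxE mulr_sumr; apply: eq_bigr => o _.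
  by rewrite mxE iAM mulrA.
- exact: (rel_sub hS s).
- move=> c [_ hc]; split.
    by move=> j; rewrite mxE; apply: S_sum => o; apply: S_mul; [apply: S_i | apply: Sz].
  rewrite -[RHS]hc.
  rewrite (eq_bigr (fun j => \sum_o iA (c 0 (enum_rank (o, j))) * (z o * s j))); last first.
    by move=> j _; rewrite mxE mulr_suml; apply: eq_bigr => o _; rewrite mulrA.
  rewrite exchange_big /= pair_bigA /=.
  rewrite (big_enum_val (fun q : T => iA (c 0 (enum_rank (q.1, q.2))) * (z q.1 * s q.2))).
  apply: eq_bigr => k _ /=; rewrite /actI /tt; congr (iA (c 0 _) * _).
  by rewrite -surjective_pairing enum_valK.
- move=> r [Kr hr].
  have Hg : forall j, exists ga : ('I_1 + 'I_p)%type -> A,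
      r 0 j = \sum_o iA (ga o) * z o by move=> j; exact: zspan.
  have [ga hga] := fchoice Hg.
  exists (\row_k ga (enum_val k).2 (enum_val k).1); split.
    split=> //; transitivity (\sum_j r 0 j * s j); last exact: hr.
    rewrite [RHS](eq_bigr (fun j => \sum_o iA (ga j o) * (z o * s j))); last first.
      by move=> j _; rewrite hga mulr_suml; apply: eq_bigr => o _; rewrite mulrA.
    rewrite [RHS]exchange_big [RHS]pair_bigA /=.
    rewrite [RHS](big_enum_val (fun q : T => iA (ga q.2 q.1) * (z q.1 * s q.2))).
    by apply: eq_bigr => k _; rewrite /actI /tt mxE.
  apply/rowP => j; rewrite mxE hga; apply: eq_bigr => o _.
  by rewrite mxE enum_rankK.
Qed.

End Main.

Unset Implicit Arguments.
Set Strict Implicit.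

Theorem proposition4p14 (A B : comPzRingType) (f : {rmorphism A -> B})
  (b : B -> Prop) (hb : is_ideal b) :
  (coherent_subring (amalgamation f b) -> coherent_ring A) /\
  (coherent_ring A ->
   coherent_module (fun _ : A => True) (fun (a : A) (x : B) => f a * x) b ->
   coherent_subring (amalgamation f b)).
Proof.
split; [exact: part1 | exact: part2].
Qed.
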